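(* Consider the two-agent zero-sum dynamic game with $K$ stages, dynamics constraints, and control bound constraints $a^i_t\le u^i_t\le b^i_t$ described in the context. Let $(x^*_{1:K+1},u^{1*}_{1:K},u^{2*}_{1:K})$ be the states and controls of a local OLNE at which strict complementarity holds, with multipliers $\lambda^i_t,\underline\nu^i_t,\bar\nu^i_t$ satisfying (COL1)–(COL6), and let $\pi^i_t$ be differentiable feedback policies with $\pi^i_t(x^*_t)=u^{i*}_t$ satisfying the standing policy assumption. Then for every $t\in[K]$ and $i$, the trajectory satisfies the feedback first-order conditions (CFB1)–(CFB7) with multipliers $\lambda^i_s,\underline\nu^i_s,\bar\nu^i_s$ ($s\in T_t$) and $\psi^i_s=\bar\nu^{-i}_s-\underline\nu^{-i}_s$ ($s\in T_{t+1}$); i.e., it satisfies the first-order necessary conditions for a local FBNE.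
   Context: Two-agent zero-sum discrete-time dynamic game with horizon $K\in\mathbb N$. States $x_t\in\mathbb R^n$, known initial state $x_1$; controls $u^i_t\in\mathbb R^{m_i}$, $i\in\{1,2\}$, subject to componentwise bounds $a^i_t\le u^i_t\le b^i_t$. Dynamics $x_{t+1}=f_t(x_t,u^1_t,u^2_t)$, $f_t$ smooth. Agent 1 has stage costs $\ell_t(x_t,u^1_t,u^2_t)$ and terminal cost $\ell_{K+1}(x_{K+1})$; $\ell^1_t=\ell_t$, $\ell^2_t=-\ell_t$, sufficiently smooth. For agent $i$, $-i$ is the other agent; reordered arguments $\ell^i_t(x_t,u^i_t,u^{-i}_t)$, $f_t(x_t,u^i_t,u^{-i}_t)$. $T_t:=\{t,\dots,K\}$. $\perp$ denotes componentwise complementarity. $J=\sum_t\ell_t+\ell_{K+1}$ along the unrolled trajectory; a local OLNE is a feasible pair of control sequences such that neither agent can decrease its cost ($J$ for agent 1, $-J$ for agent 2) by a feasible unilateral change within a neighborhood. Open-loop first-order conditions: for each $i$ there exist $\lambda^i_t,\underline\nu^i_t,\bar\nu^i_t$ ($t\in[K]$) with (COL1) $\nabla_{x_t}\ell^i_t+(\nabla_{x_t}f_t)^\top\lambda^i_t-\lambda^i_{t-1}=0$, $t=2,\dots,K$; (COL2) $\nabla_{u^i_t}\ell^i_t+(\nabla_{u^i_t}f_t)^\top\lambda^i_t-\underline\nu^i_t+\bar\nu^i_t=0$, $t\in[K]$; (COL3) $\nabla_{x_{K+1}}\ell^i_{K+1}-\lambda^i_K=0$; (COL4) dynamics hold;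 (COL5) $a^i_t\le u^i_t\perp\underline\nu^i_t\ge0$; (COL6) $0\le\bar\nu^i_t\perp u^i_t\le b^i_t$. Feedback first-order conditions for agent $i$ at time $t$ (KKT of minimizing $\sum_{s=t}^K\ell^i_s+\ell^i_{K+1}$ over $u^i_{t:K},u^{-i}_{t+1:K},x_{t+1:K+1}$ s.t. dynamics ($s\in T_t$), $u^{-i}_s=\pi^{-i}_s(x_s)$ ($s\in T_{t+1}$), $a^i_s\le u^i_s\le b^i_s$ ($s\in T_t$)): there exist $\lambda^i_s,\underline\nu^i_s,\bar\nu^i_s$ ($s\in T_t$), $\psi^i_s$ ($s\in T_{t+1}$) with (CFB1) $\nabla_{u^{-i}_s}\ell^i_s+(\nabla_{u^{-i}_s}f_s)^\top\lambda^i_s-\psi^i_s=0$, $s\in T_{t+1}$; (CFB2) $\nabla_{u^i_s}\ell^i_s+(\nabla_{u^i_s}f_s)^\top\lambda^i_s-\underline\nu^i_s+\bar\nu^i_s=0$, $s\in T_t$; (CFB3) $\nabla_{x_{K+1}}\ell^i_{K+1}-\lambda^i_K=0$; (CFB4) dynamics for $s\in T_t$; (CFB5) $u^{-i}_s=\pi^{-i}_s(x_s)$, $s\in T_{t+1}$; (CFB6) $a^i_s\le u^i_s\perp\underline\nu^i_s\ge0$, $0\le\bar\nu^i_s\perp u^i_s\le b^i_s$, $s\in T_t$; (CFB7) $\nabla_{x_s}\ell^i_s-\lambda^i_{s-1}+(\nabla_{x_s}f_s)^\top\lambda^i_s+(\nabla_{x_s}\pi^{-i}_s)^\top\psi^i_s=0$,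 $s\in T_{t+1}$. Strict complementarity: for every component $j$, exactly one of $[u^i_s]_j-[a^i_s]_j$ and $[\underline\nu^i_s]_j$ is zero, and exactly one of $[b^i_s]_j-[u^i_s]_j$ and $[\bar\nu^i_s]_j$ is zero. Standing policy assumption (taken as a consequence of strict complementarity): whenever a bound on $[u^i_s]_j$ is active, the $j$-th row of $\nabla_{x_s}\pi^i_s(x_s)$ is zero. *)

(* Defs.v *)
From HB Require Import structures.
From mathcomp Require Import all_boot all_order all_algebra.
From mathcomp Require Import all_classical all_reals all_analysis.
Set Implicit Arguments. Unset Strict Implicit. Unset Printing Implicit Defensive.
Import Order.TTheory GRing.Theory Num.Theory.
Import numFieldNormedType.Exports.
Local Open Scope ring_scope.

(* Time indices are natural numbers; t ranges over [K] = 1..K,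
   states are indexed 1..K+1.  Vectors are row vectors 'rV[R]_d.
   Agent-i data are given in "reordered" form: stage cost li t x ui u_oth,
   dynamics fi t x ui u_oth.  *)

Definition grad (R : realType) (d : nat) (g : 'rV[R]_d -> R) (x : 'rV[R]_d)
  : 'rV[R]_d := \row_j ('d g x (delta_mx 0 j)).

(* transposed-Jacobian/vector product (nabla g(x))^T lam, written as a row
   vector.  The library's jacobian 'J g x : 'M_(p, q) satisfies
   v *m 'J g x = 'd g x v, i.e. it is the transpose of the usual Jacobian
   matrix nabla g(x) (q x p); hence (nabla g)^T lam = ('J g x) lam^T, i.e.
   lam *m ('J g x)^T as a row vector. *)
Definition jacT (R : realType) (p q : nat) (g : 'rV[R]_p -> 'rV[R]_q)
  (x : 'rV[R]_p) (lam : 'rV[R]_q) : 'rV[R]_p := lam *m ('J g x)^T.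

(* j-th row of the usual Jacobian nabla g(x) (= j-th column of 'J g x) *)
Definition jac_row (R : realType) (p q : nat) (g : 'rV[R]_p -> 'rV[R]_q)
  (x : 'rV[R]_p) (j : 'I_q) : 'rV[R]_p := (col j ('J g x))^T.

Definition compl_lo (R : realType) (m : nat) (lo v nu : 'rV[R]_m) : Prop :=
  forall j, lo 0 j <= v 0 j /\ 0 <= nu 0 j /\ (v 0 j - lo 0 j) * nu 0 j = 0.
Definition compl_hi (R : realType) (m : nat) (v hi nu : 'rV[R]_m) : Prop :=
  forall j, v 0 j <= hi 0 j /\ 0 <= nu 0 j /\ nu 0 j * (hi 0 j - v 0 j) = 0.

(* Open-loop first-order conditions (COL1)-(COL6) for one agent, with own
   control u (dim m), other agent's control uo (dim mo). *)
Definition OL_conditions (R : realType) (n m mo K : nat)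
  (li : nat -> 'rV[R]_n -> 'rV[R]_m -> 'rV[R]_mo -> R)
  (fi : nat -> 'rV[R]_n -> 'rV[R]_m -> 'rV[R]_mo -> 'rV[R]_n)
  (lT : 'rV[R]_n -> R) (a b : nat -> 'rV[R]_m)
  (x : nat -> 'rV[R]_n) (u : nat -> 'rV[R]_m) (uo : nat -> 'rV[R]_mo)
  (lam : nat -> 'rV[R]_n) (nul nuh : nat -> 'rV[R]_m) : Prop :=
  (forall t, (2 <= t <= K)%N ->
        grad (fun y => li t y (u t) (uo t)) (x t)
        + jacT (fun y => fi t y (u t) (uo t)) (x t) (lam t) - lam t.-1 = 0) /\
      (forall t, (1 <= t <= K)%N ->
        grad (fun v => li t (x t) v (uo t)) (u t)
        + jacT (fun v => fi t (x t) v (uo t)) (u t) (lam t) - nul t + nuh t = 0) /\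
      (grad lT (x K.+1) - lam K = 0) /\
      (forall t, (1 <= t <= K)%N -> x t.+1 = fi t (x t) (u t) (uo t)) /\
      (forall t, (1 <= t <= K)%N -> compl_lo (a t) (u t) (nul t)) /\
    (forall t, (1 <= t <= K)%N -> compl_hi (u t) (b t) (nuh t)).

(* Feedback first-order conditions (CFB1)-(CFB7) for one agent at time t,
   with the other agent's feedback policy po, multipliers lam, nul, nuh
   (used on T_t = {t..K}) and psi (used on T_{t+1}). *)
Definition FB_conditions (R : realType) (n m mo K t : nat)
  (li : nat -> 'rV[R]_n -> 'rV[R]_m -> 'rV[R]_mo -> R)
  (fi : nat -> 'rV[R]_n -> 'rV[R]_m -> 'rV[R]_mo -> 'rV[R]_n)
  (lT : 'rV[R]_n -> R) (a b : nat -> 'rV[R]_m)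
  (po : nat -> 'rV[R]_n -> 'rV[R]_mo)
  (x : nat -> 'rV[R]_n) (u : nat -> 'rV[R]_m) (uo : nat -> 'rV[R]_mo)
  (lam : nat -> 'rV[R]_n) (nul nuh : nat -> 'rV[R]_m)
  (psi : nat -> 'rV[R]_mo) : Prop :=
  (forall s, (t.+1 <= s <= K)%N ->
        grad (fun v => li s (x s) (u s) v) (uo s)
        + jacT (fun v => fi s (x s) (u s) v) (uo s) (lam s) - psi s = 0) /\
      (forall s, (t <= s <= K)%N ->
        grad (fun v => li s (x s) v (uo s)) (u s)
        + jacT (fun v => fi s (x s) v (uo s)) (u s) (lam s) - nul s + nuh s = 0) /\
      (grad lT (x K.+1) - lam K = 0) /\
      (forall s, (t <= s <= K)%N -> x s.+1 = fi s (x s) (u s) (uo s)) /\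
      (forall s, (t.+1 <= s <= K)%N -> uo s = po s (x s)) /\
      (forall s, (t <= s <= K)%N ->
        compl_lo (a s) (u s) (nul s) /\ compl_hi (u s) (b s) (nuh s)) /\
    (forall s, (t.+1 <= s <= K)%N ->
        grad (fun y => li s y (u s) (uo s)) (x s) - lam s.-1
        + jacT (fun y => fi s y (u s) (uo s)) (x s) (lam s)
        + jacT (po s) (x s) (psi s) = 0).

Definition strict_compl (R : realType) (m K : nat) (a b u nul nuh : nat -> 'rV[R]_m)
  : Prop :=
  forall s, (1 <= s <= K)%N -> forall j,
    ((u s 0 j - a s 0 j = 0 \/ nul s 0 j = 0) /\
       ~ (u s 0 j - a s 0 j = 0 /\ nul s 0 j = 0)) /\
    ((b s 0 j - u s 0 j = 0 \/ nuh s 0 j = 0) /\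
       ~ (b s 0 j - u s 0 j = 0 /\ nuh s 0 j = 0)).

Definition policy_assumption (R : realType) (n m K : nat)
  (p : nat -> 'rV[R]_n -> 'rV[R]_m) (a b u : nat -> 'rV[R]_m)
  (x : nat -> 'rV[R]_n) : Prop :=
  forall s, (1 <= s <= K)%N -> forall j,
    (u s 0 j = a s 0 j \/ u s 0 j = b s 0 j) -> jac_row (p s) (x s) j = 0.

(* Unrolled trajectory: state_traj ... k is the state at time k.+1. *)
Fixpoint state_traj (R : realType) (n m1 m2 : nat)
  (f : nat -> 'rV[R]_n -> 'rV[R]_m1 -> 'rV[R]_m2 -> 'rV[R]_n)
  (x1 : 'rV[R]_n) (u1 : nat -> 'rV[R]_m1) (u2 : nat -> 'rV[R]_m2) (k : nat)
  : 'rV[R]_n :=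
  match k with
  | 0 => x1
  | k'.+1 => f k (state_traj f x1 u1 u2 k') (u1 k) (u2 k)
  end.

(* Agent 1's cost J along the unrolled trajectory (agent 2's cost is -J). *)
Definition game_cost (R : realType) (n m1 m2 K : nat)
  (f : nat -> 'rV[R]_n -> 'rV[R]_m1 -> 'rV[R]_m2 -> 'rV[R]_n)
  (l : nat -> 'rV[R]_n -> 'rV[R]_m1 -> 'rV[R]_m2 -> R) (lT : 'rV[R]_n -> R)
  (x1 : 'rV[R]_n) (u1 : nat -> 'rV[R]_m1) (u2 : nat -> 'rV[R]_m2) : R :=
  \sum_(1 <= t < K.+1) l t (state_traj f x1 u1 u2 t.-1) (u1 t) (u2 t)
  + lT (state_traj f x1 u1 u2 K).

Definition feasible (R : realType) (m K : nat) (a b u : nat -> 'rV[R]_m) : Prop :=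
  forall t, (1 <= t <= K)%N -> forall j, a t 0 j <= u t 0 j <= b t 0 j.

Definition local_OLNE (R : realType) (n m1 m2 K : nat)
  (f : nat -> 'rV[R]_n -> 'rV[R]_m1 -> 'rV[R]_m2 -> 'rV[R]_n)
  (l : nat -> 'rV[R]_n -> 'rV[R]_m1 -> 'rV[R]_m2 -> R) (lT : 'rV[R]_n -> R)
  (a1 b1 : nat -> 'rV[R]_m1) (a2 b2 : nat -> 'rV[R]_m2)
  (x1 : 'rV[R]_n) (u1 : nat -> 'rV[R]_m1) (u2 : nat -> 'rV[R]_m2) : Prop :=
  [/\ feasible K a1 b1 u1, feasible K a2 b2 u2 &
      exists2 e : R, 0 < e &
        (forall v1 : nat -> 'rV[R]_m1, feasible K a1 b1 v1 ->
           (forall t, (1 <= t <= K)%N -> `|v1 t - u1 t| < e) ->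
           game_cost K f l lT x1 u1 u2 <= game_cost K f l lT x1 v1 u2) /\
        (forall v2 : nat -> 'rV[R]_m2, feasible K a2 b2 v2 ->
           (forall t, (1 <= t <= K)%N -> `|v2 t - u2 t| < e) ->
           - game_cost K f l lT x1 u1 u2 <= - game_cost K f l lT x1 u1 v2)].

(* Main.v *)
Require Import Defs.
From HB Require Import structures.
From mathcomp Require Import all_boot all_order all_algebra.
From mathcomp Require Import all_classical all_reals all_analysis.
Import Order.TTheory GRing.Theory Num.Theory.
Import numFieldNormedType.Exports.
Local Open Scope ring_scope.

Lemma grad_opp (R : realType) d (h : 'rV[R]_d -> R) y :
  differentiable h y -> grad (fun z => - h z) y = - grad h y.
Proof.
move=> dh; apply/matrixP => i j; rewrite !mxE.
have -> : (fun z => - h z) = - h by [].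
by rewrite diffN.
Qed.

Section P.
Variables (R : realType) (n m1 m2 : nat).
Variable g : 'rV[R]_n * 'rV[R]_m1 * 'rV[R]_m2 -> R.
Hypothesis dg : forall p, differentiable g p.

Lemma dpart1 c1 c2 y : differentiable (fun z => g (z, c1, c2)) y.
Proof.
have -> : (fun z => g (z, c1, c2)) = g \o (fun z => ((z, c1), c2)) by [].
by apply: differentiable_comp.
Qed.
Lemma dpart2 c1 c2 y : differentiable (fun z => g (c1, z, c2)) y.
Proof.
have -> : (fun z => g (c1, z, c2)) = g \o (fun z => ((c1, z), c2)) by [].
apply: differentiable_comp => //.
apply: differentiable_pair => //.
apply: (@differentiable_pair _ _ _ _ (cst c1) id) => //.
Qed.
Lemma dpart3 c1 c2 y : differentiable (fun z => g (c1, c2, z)) y.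
Proof.
have -> : (fun z => g (c1, c2, z)) = g \o (fun z => ((c1, c2), z)) by [].
by apply: differentiable_comp.
Qed.
End P.

Lemma jacT_opp (R : realType) p q (g : 'rV[R]_p -> 'rV[R]_q) x (lam : 'rV[R]_q) :
  jacT g x (- lam) = - jacT g x lam.
Proof. by rewrite /jacT mulNmx. Qed.

Lemma jacT_zero (R : realType) p q (g : 'rV[R]_p -> 'rV[R]_q) x (lam : 'rV[R]_q) :
  (forall j, lam 0 j = 0 \/ jac_row g x j = 0) -> jacT g x lam = 0.
Proof.
move=> H; apply/matrixP => i k; rewrite (ord1 i) /jacT !mxE.
apply: big1 => j _; rewrite !mxE.

case: (H j) => [->|E]; first by rewrite mul0r.
have: jac_row g x j 0 k = 0 by rewrite E mxE.
by rewrite /jac_row !mxE => ->; rewrite mulr0.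
Qed.

Lemma sub0E (V : zmodType) (a b : V) : a - b = 0 -> a = b.
Proof. by move/eqP; rewrite subr_eq0 => /eqP. Qed.

Lemma aux (V : zmodType) (G J a b : V) : G + J - a + b = 0 -> -G + -J - (b - a) = 0.
Proof.
move=> H; rewrite -oppr0 -H !opprD !opprK.
by rewrite (addrC (- b)) addrA.
Qed.

Lemma psi_zero (R : realType) n m (a b u nl nh : 'rV[R]_m) (g : 'rV[R]_n -> 'rV[R]_m) x :
  compl_lo a u nl -> compl_hi u b nh ->
  (forall j, u 0 j = a 0 j \/ u 0 j = b 0 j -> jac_row g x j = 0) ->
  jacT g x (nh - nl) = 0.
Proof.
move=> Hl Hh Hp; apply: jacT_zero => j.
have [_ [_ El]] := Hl j; have [_ [_ Eh]] := Hh j.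
have [nl0|nl0] := eqVneq (nl 0 j) 0.
  have [nh0|nh0] := eqVneq (nh 0 j) 0.
    by left; rewrite !mxE nl0 nh0 subrr.
  right; apply: Hp; right; apply/esym/sub0E.
  by move/eqP: Eh; rewrite mulf_eq0 (negbTE nh0) /= => /eqP.
right; apply: Hp; left; apply/sub0E.
by move/eqP: El; rewrite mulf_eq0 (negbTE nl0) orbF => /eqP.
Qed.
From mathcomp Require Import zify.
Arguments psi_zero {R n m a b u nl nh g x}.
Theorem theorem2 (R : realType) (n m1 m2 K : nat)
  (f : nat -> 'rV[R]_n -> 'rV[R]_m1 -> 'rV[R]_m2 -> 'rV[R]_n)
  (l : nat -> 'rV[R]_n -> 'rV[R]_m1 -> 'rV[R]_m2 -> R)
  (lT : 'rV[R]_n -> R)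
  (a1 b1 : nat -> 'rV[R]_m1) (a2 b2 : nat -> 'rV[R]_m2)
  (x1 : 'rV[R]_n)
  (x : nat -> 'rV[R]_n) (u1 : nat -> 'rV[R]_m1) (u2 : nat -> 'rV[R]_m2)
  (lam1 lam2 : nat -> 'rV[R]_n)
  (nul1 nuh1 : nat -> 'rV[R]_m1) (nul2 nuh2 : nat -> 'rV[R]_m2)
  (pi1 : nat -> 'rV[R]_n -> 'rV[R]_m1) (pi2 : nat -> 'rV[R]_n -> 'rV[R]_m2) :
  (* smoothness (differentiability) of dynamics, costs and policies *)
  (forall t (p : 'rV[R]_n * 'rV[R]_m1 * 'rV[R]_m2),
      differentiable (fun q : 'rV[R]_n * 'rV[R]_m1 * 'rV[R]_m2 =>
                        f t q.1.1 q.1.2 q.2) p) ->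
  (forall t (p : 'rV[R]_n * 'rV[R]_m1 * 'rV[R]_m2),
      differentiable (fun q : 'rV[R]_n * 'rV[R]_m1 * 'rV[R]_m2 =>
                        l t q.1.1 q.1.2 q.2) p) ->
  (forall y : 'rV[R]_n, differentiable lT y) ->
  (forall t (y : 'rV[R]_n), differentiable (pi1 t) y) ->
  (forall t (y : 'rV[R]_n), differentiable (pi2 t) y) ->
  (* (x, u1, u2) is a local OLNE from the initial state x1 *)
  x 1%N = x1 ->
  local_OLNE K f l lT a1 b1 a2 b2 x1 u1 u2 ->
  (* open-loop first-order conditions for both agents *)
  OL_conditions K l f lT a1 b1 x u1 u2 lam1 nul1 nuh1 ->
  OL_conditions K (fun t y v2 v1 => - l t y v1 v2) (fun t y v2 v1 => f t y v1 v2)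
    (fun y => - lT y) a2 b2 x u2 u1 lam2 nul2 nuh2 ->
  (* strict complementarity *)
  strict_compl K a1 b1 u1 nul1 nuh1 ->
  strict_compl K a2 b2 u2 nul2 nuh2 ->
  (* feedback policies through the equilibrium, with the policy assumption *)
  (forall t, (1 <= t <= K)%N -> pi1 t (x t) = u1 t) ->
  (forall t, (1 <= t <= K)%N -> pi2 t (x t) = u2 t) ->
  policy_assumption K pi1 a1 b1 u1 x ->
  policy_assumption K pi2 a2 b2 u2 x ->
  (* conclusion: feedback first-order conditions for every t in [K] *)
  forall t, (1 <= t <= K)%N ->
    FB_conditions K t l f lT a1 b1 pi2 x u1 u2 lam1 nul1 nuh1
      (fun s => nuh2 s - nul2 s) /\
    FB_conditions K t (fun s y v2 v1 => - l s y v1 v2)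
      (fun s y v2 v1 => f s y v1 v2) (fun y => - lT y) a2 b2 pi1 x u2 u1
      lam2 nul2 nuh2 (fun s => nuh1 s - nul1 s).
Proof.
move=> df dl dlT dp1 dp2 x1E OLNE [C11 [C12 [C13 [C14 [C15 C16]]]]]
  [C21 [C22 [C23 [C24 [C25 C26]]]]] sc1 sc2 p1E p2E pa1 pa2 t /andP[t1 tK].
have D1 s c1 c2 y : differentiable (fun z => l s z c1 c2) y.
  exact: (@dpart1 R n m1 m2 (fun q => l s q.1.1 q.1.2 q.2) (dl s)).
have D2 s c1 c2 y : differentiable (fun z => l s c1 z c2) y.
  exact: (@dpart2 R n m1 m2 (fun q => l s q.1.1 q.1.2 q.2) (dl s)).
have D3 s c1 c2 y : differentiable (fun z => l s c1 c2 z) y.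
  exact: (@dpart3 R n m1 m2 (fun q => l s q.1.1 q.1.2 q.2) (dl s)).
have L : forall s, (1 <= s <= K)%N -> lam2 s = - lam1 s.
  suff H : forall k, (k < K)%N -> lam2 (K - k)%N = - lam1 (K - k)%N.
    move=> s /andP[s1 sK]; have := H (K - s)%N.
    have -> : (K - (K - s) = s)%N by lia.
    by apply; lia.
  elim=> [_|k IH kK].
    rewrite subn0; move: C23; rewrite /= grad_opp // => /sub0E <-.
    by move/sub0E: C13 => <-.
  have E : (K - k = (K - k.+1).+1)%N by lia.
  have := C11 (K - k)%N; have := C21 (K - k)%N.
  rewrite /= IH; last by lia.
  rewrite E /= grad_opp // jacT_opp => H2 H1.
  move/sub0E: (H2 ltac:(lia)) => <-; move/sub0E: (H1 ltac:(lia)) => <-.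
  by rewrite opprD.
split.
- split; [|split; [|split; [|split; [|split; [|split]]]]].
  + move=> s /andP[ts sK]; have s1 : (1 <= s <= K)%N by lia.
    have := C22 s s1; rewrite /= grad_opp // (L s s1) jacT_opp => /aux.
    by rewrite !opprK.
  + move=> s /andP[ts sK]; apply: C12; lia.
  + exact: C13.
  + move=> s /andP[ts sK]; apply: C14; lia.
  + move=> s /andP[ts sK]; rewrite p2E //; lia.
  + move=> s /andP[ts sK]; have s1 : (1 <= s <= K)%N by lia.
    by split; [exact: C15|exact: C16].
  + move=> s /andP[ts sK]; have s1 : (1 <= s <= K)%N by lia.
    rewrite (psi_zero (C25 s s1) (C26 s s1)); last by move=> j; apply: pa2.
    rewrite addr0 addrAC; apply: C11; lia.
- split; [|split; [|split; [|split; [|split; [|split]]]]].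
  + move=> s /andP[ts sK]; have s1 : (1 <= s <= K)%N by lia.
    by rewrite /= grad_opp // (L s s1) jacT_opp; apply: aux; apply: C12.
  + move=> s /andP[ts sK]; apply: C22; lia.
  + exact: C23.
  + move=> s /andP[ts sK]; apply: C24; lia.
  + move=> s /andP[ts sK]; rewrite p1E //; lia.
  + move=> s /andP[ts sK]; have s1 : (1 <= s <= K)%N by lia.
    by split; [exact: C25|exact: C26].
  + move=> s /andP[ts sK]; have s1 : (1 <= s <= K)%N by lia.
    rewrite (psi_zero (C15 s s1) (C16 s s1)); last by move=> j; apply: pa1.
    rewrite addr0 addrAC; apply: C21; lia.
Qed.
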